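(* Let $\widetilde M_0(\varepsilon),\widetilde M_1(\varepsilon)$ be two families of diagonalizable linear operators on $\mathbb C^2$ depending on a parameter $\varepsilon>0$. Let $\widetilde\Lambda_i=\operatorname{diag}(\lambda_{i1},\lambda_{i2})$ be the matrix of $\widetilde M_i$ in its eigenbasis, $i=0,1$. Let $C(\varepsilon)$ be the transition matrix between the eigenbases, so that in the eigenbasis of $\widetilde M_0$ the matrix of $\widetilde M_1$ is $C(\varepsilon)\widetilde\Lambda_1C^{-1}(\varepsilon)$. Suppose the eigenbases converge to some bases as $\varepsilon\to0$, and that $C(\varepsilon)$ tends to a unipotent lower-triangular matrix $C_0$. Suppose $$\nu_0=\frac{\lambda_{02}}{\lambda_{01}}\to0,\qquad \nu_1=\frac{\lambda_{11}}{\lambda_{12}}\to0\quad(\varepsilon\to0),$$ and suppose the upper-triangular (i.e. $(1,2)$) entry $u(\varepsilon)$ of $C(\varepsilon)$ satisfies $u(\varepsilon)=o(\nu_0\nu_1)$ as $\varepsilon\to0$. Then the matrix of $\widetilde M_1^{-1}\widetilde M_0\widetilde M_1\widetilde M_0^{-1}$ in the eigenbasis of $\widetilde M_0$ converges to $C_0$ as $\varepsilon\to0$. *)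

(* Defs.v *)
From HB Require Import structures.
From mathcomp Require Import all_boot all_order all_algebra.
From mathcomp Require Export complex.
From mathcomp Require Export all_classical all_reals all_analysis.
Export Order.TTheory GRing.Theory Num.Theory.
Export numFieldTopology.Exports numFieldNormedType.Exports.
Set Implicit Arguments. Unset Strict Implicit. Unset Printing Implicit Defensive.
Local Open Scope ring_scope.
Local Open Scope classical_set_scope.

(* The complex numbers R[i] (R a real closed field) are a numClosedFieldType;
   equip them with their standard (norm) topology, as done in
   numFieldTopology for numFieldTypes, so that limits of complex-valued
   functions and of complex matrices ('M[R[i]]_(m,n), product topology)
   make sense. *)
HB.instance Definition _ (R : rcfType) := PseudoPointedMetric.copy R[i] (R[i])^o.

Definition diag2 (K : nzRingType) (a b : K) : 'M[K]_2 :=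
  diag_mx (\row_(j < 2) (if j == ord0 then a else b)).

Definition littleo_0p (R : realType) (u v : R -> R[i]) : Prop :=
  forall e : R, 0 < e -> \forall x \near 0^'+, `|u x| <= (e%:C)%C * `|v x|.

(* Main.v *)
Require Import Defs.
From HB Require Import structures.
From mathcomp Require Import all_boot all_order all_algebra.
From mathcomp Require Import complex.
From mathcomp Require Import all_classical all_reals all_analysis.
From mathcomp Require Import ring.
Import Order.TTheory GRing.Theory Num.Theory.
Import numFieldTopology.Exports numFieldNormedType.Exports.
Local Open Scope ring_scope.
Local Open Scope classical_set_scope.
Set Implicit Arguments. Unset Strict Implicit. Unset Printing Implicit Defensive.

Section M2.
Variable K : fieldType.

Definition mx2 (a b c d : K) : 'M[K]_2 :=
  \matrix_(i < 2, j < 2) if i == ord0 then (if j == ord0 then a else b)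
                         else (if j == ord0 then c else d).

Lemma ord2P (i : 'I_2) : i = ord0 \/ i = ord_max.
Proof. case: i => [[|[|//]]] Hi; [left|right]; exact: val_inj. Qed.

Lemma mx2E (A : 'M[K]_2) : A = mx2 (A ord0 ord0) (A ord0 ord_max) (A ord_max ord0) (A ord_max ord_max).
Proof.
apply/matrixP => i j; rewrite mxE.
by case: (ord2P i) => ->; case: (ord2P j) => ->.
Qed.

Lemma mx2_entries a b c d :
  [/\ mx2 a b c d ord0 ord0 = a, mx2 a b c d ord0 ord_max = b,
      mx2 a b c d ord_max ord0 = c & mx2 a b c d ord_max ord_max = d].
Proof. by rewrite !mxE. Qed.

Lemma mul_mx2 a b c d a' b' c' d' :
  mx2 a b c d *m mx2 a' b' c' d' =
  mx2 (a*a'+b*c') (a*b'+b*d') (c*a'+d*c') (c*b'+d*d').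
Proof.
apply/matrixP => i j; rewrite !mxE !big_ord_recl big_ord0 !mxE /=.
by case: (ord2P i) => ->; case: (ord2P j) => -> /=; rewrite addr0.
Qed.

Lemma diag2E a b : diag_mx (\row_(j < 2) (if j == ord0 then a else b)) = mx2 a 0 0 b.
Proof.
apply/matrixP => i j; rewrite !mxE.
by case: (ord2P i) => ->; case: (ord2P j) => -> /=; rewrite ?mxE /=; rewrite ?mulr1n ?mulr0n.
Qed.

Lemma det_mx2 a b c d : \det (mx2 a b c d) = a * d - b * c.
Proof.
rewrite (expand_det_row _ ord0) !big_ord_recl big_ord0 /cofactor !det_mx11 !mxE /=.
rewrite /bump /=; ring.
Qed.


End M2.
Section M2b.
Variable K : fieldType.

Lemma scalar1_mx2 : (1%:M : 'M[K]_2) = mx2 1 0 0 1.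
Proof.
apply/matrixP => i j; rewrite !mxE.
by case: (ord2P i) => ->; case: (ord2P j) => -> /=.
Qed.

Lemma inv_mx2 (a b c d : K) : a * d - b * c != 0 ->
  invmx (mx2 a b c d) = mx2 (d / (a*d-b*c)) (- b / (a*d-b*c)) (- c / (a*d-b*c)) (a / (a*d-b*c)).
Proof.
move=> hD.
have hU : mx2 a b c d \in unitmx by rewrite unitmxE det_mx2 unitfE.
have h1 : mx2 a b c d *m mx2 (d / (a*d-b*c)) (- b / (a*d-b*c)) (- c / (a*d-b*c)) (a / (a*d-b*c)) = 1%:M.
  rewrite mul_mx2 scalar1_mx2; congr mx2; field; exact: hD.
by rewrite -[RHS](mulKmx hU) h1 mulmx1.
Qed.

Lemma key (p u q s a1 a2 b1 b2 : K) :
  a1 != 0 -> a2 != 0 -> b1 != 0 -> b2 != 0 -> p * s - u * q != 0 ->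
  let n0 := a2 / a1 in let n1 := b1 / b2 in let w := u / (n0 * n1) in
  let T := (p * s - u * q)^-1 in
  let K11 := T * (p*s - n0*n0*n1*w*q) in
  let K21 := T * (p*q*(n0-1)*n1) in
  let K12 := T * (w*s*(1-n0)) in
  let K22 := T * (p*s - q*w*n1) in
  mx2 p u q s *m invmx (mx2 b1 0 0 b2) *m invmx (mx2 p u q s) *m mx2 a1 0 0 a2
   *m mx2 p u q s *m mx2 b1 0 0 b2 *m invmx (mx2 p u q s) *m invmx (mx2 a1 0 0 a2)
  = mx2 p u q s *m mx2 (T * (s*K11 - q*n0*K12)) (T * (- w*n1*K11 + p*K12))
                       (T * (s*K21 - q*n0*K22)) (T * (- w*n1*K21 + p*K22)).
Proof.
move=> h1 h2 h3 h4 hD n0 n1 w T K11 K21 K12 K22.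
rewrite !inv_mx2; last first; rewrite ?mul0r ?mulr0 ?subr0 ?mulf_neq0 //.
rewrite !mul_mx2 /K11 /K21 /K12 /K22 /T /w /n0 /n1.
congr mx2; field; rewrite ?hD ?h1 ?h2 ?h3 ?h4 //=.
Qed. End M2b.

Section Conj.
Variables (K : comUnitRingType) (n : nat).
Implicit Types (P D : 'M[K]_n).

Lemma invmx_conj P D : P \in unitmx -> D \in unitmx ->
  invmx (P *m D *m invmx P) = P *m invmx D *m invmx P.
Proof.
move=> hP hD.
have hU : P *m D *m invmx P \in unitmx by rewrite !unitmx_mul hP hD unitmx_inv hP.
have h1 : (P *m D *m invmx P) *m (P *m invmx D *m invmx P) = 1%:M.
  by rewrite !mulmxA (mulmxKV hP) (mulmxK hD) (mulmxV hP).
by rewrite -[RHS](mulKmx hU) h1 mulmx1.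
Qed.

Lemma conj_form P0 P1 D0 D1 : P0 \in unitmx -> P1 \in unitmx ->
  D0 \in unitmx -> D1 \in unitmx ->
  invmx P0 *m (invmx (P1 *m D1 *m invmx P1) *m (P0 *m D0 *m invmx P0)
     *m (P1 *m D1 *m invmx P1) *m invmx (P0 *m D0 *m invmx P0)) *m P0 =
  (invmx P0 *m P1) *m invmx D1 *m invmx (invmx P0 *m P1) *m D0 *m (invmx P0 *m P1)
     *m D1 *m invmx (invmx P0 *m P1) *m invmx D0.
Proof.
move=> h0 h1 hD0 hD1.
rewrite !invmx_conj //.
have hC : invmx P0 *m P1 \in unitmx by rewrite unitmx_mul unitmx_inv h0 h1.
have -> : invmx (invmx P0 *m P1) = invmx P1 *m P0.
  have e : (invmx P0 *m P1) *m (invmx P1 *m P0) = 1%:M.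
    by rewrite !mulmxA (mulmxK h1) (mulVmx h0).
  by rewrite -[RHS](mulKmx hC) e mulmx1.
by rewrite !mulmxA (mulmxKV h0).
Qed.
End Conj.

Section Lim.
Variable R : realType.
Local Notation F := ((0:R)^'+).

Lemma cM (f g : R -> R[i]) (a b : R[i]) : f @ F --> a -> g @ F --> b ->
  (fun x => f x * g x) @ F --> a * b.
Proof. exact: cvgM. Qed.
Lemma cD (f g : R -> R[i]) (a b : R[i]) : f @ F --> a -> g @ F --> b ->
  (fun x => f x + g x) @ F --> a + b.
Proof. move=> hf hg. exact: (@cvgD _ (R[i])^o _ _ _ f g a b hf hg). Qed.
Lemma cB (f g : R -> R[i]) (a b : R[i]) : f @ F --> a -> g @ F --> b ->
  (fun x => f x - g x) @ F --> a - b.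
Proof. move=> hf hg. exact: (@cvgB _ (R[i])^o _ _ _ f g a b hf hg). Qed.
Lemma cN (f : R -> R[i]) (a : R[i]) : f @ F --> a ->
  (fun x => - f x) @ F --> - a.
Proof. move=> hf. exact: (@cvgN _ (R[i])^o _ _ _ f a hf). Qed.
Lemma cV (f : R -> R[i]) (a : R[i]) : a != 0 -> f @ F --> a ->
  (fun x => (f x)^-1) @ F --> a^-1.
Proof. exact: cvgV. Qed.
Lemma cC (a : R[i]) : (fun x : R => a) @ F --> a.
Proof. exact: cvg_cst. Qed.
Lemma cEq (f : R -> R[i]) (a b : R[i]) : a = b -> f @ F --> a -> f @ F --> b.
Proof. by move=> ->. Qed.

Lemma cvg_mx2 (f1 f2 f3 f4 : R -> R[i]) (a b c d : R[i]) :
  f1 @ F --> a -> f2 @ F --> b -> f3 @ F --> c -> f4 @ F --> d ->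
  (fun x => mx2 (f1 x) (f2 x) (f3 x) (f4 x)) @ F --> mx2 a b c d.
Proof.
move=> h1 h2 h3 h4.
apply/cvg_ballP => e e0.
move/cvg_ballP: h1 => /(_ e e0) h1.
move/cvg_ballP: h2 => /(_ e e0) h2.
move/cvg_ballP: h3 => /(_ e e0) h3.
move/cvg_ballP: h4 => /(_ e e0) h4.
near=> x.
split => // i j; rewrite !mxE.
case: (ord2P i) => ->; case: (ord2P j) => -> /=; near: x; by [].
Unshelve. all: by end_near.
Qed.
End Lim.

Ltac cvg_auto :=
  repeat match goal with
  | |- (fun x => @?A x * @?B x) @ _ --> _ => apply: (cM A B)
  | |- (fun x => @?A x + @?B x) @ _ --> _ => apply: (cD A B)
  | |- (fun x => @?A x - @?B x) @ _ --> _ => apply: (cB A B)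
  | |- (fun x => - @?A x) @ _ --> _ => apply: (cN A)
  | |- (fun _ => ?c) @ _ --> _ => apply: cC
  | |- _ => eassumption
  end.

Unset Implicit Arguments.

Theorem lemma3p5 (R : realType)
  (M0 M1 P0 P1 : R -> 'M[R[i]]_2) (l01 l02 l11 l12 : R -> R[i])
  (B0 B1 C0 : 'M[R[i]]_2)
  (* P_i(eps): invertible matrix whose columns form an eigenbasis of M_i(eps) *)
  (hP0 : forall eps, 0 < eps -> P0 eps \in unitmx)
  (hP1 : forall eps, 0 < eps -> P1 eps \in unitmx)
  (* eigenvalues are nonzero (the operators are invertible) *)
  (hl : forall eps, 0 < eps ->
     [/\ l01 eps != 0, l02 eps != 0, l11 eps != 0 & l12 eps != 0])
  (hM0 : forall eps, 0 < eps ->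
     M0 eps = P0 eps *m diag2 (l01 eps) (l02 eps) *m invmx (P0 eps))
  (hM1 : forall eps, 0 < eps ->
     M1 eps = P1 eps *m diag2 (l11 eps) (l12 eps) *m invmx (P1 eps))
  (* the eigenbases converge to bases *)
  (hB0 : P0 x @[x --> 0^'+] --> B0) (hB0u : B0 \in unitmx)
  (hB1 : P1 x @[x --> 0^'+] --> B1) (hB1u : B1 \in unitmx)
  (* transition matrix C(eps) = P0^-1 P1 tends to unipotent lower-triangular C0 *)
  (hC : (invmx (P0 x) *m P1 x) @[x --> 0^'+] --> C0)
  (hC0 : [/\ C0 ord0 ord0 = 1, C0 ord_max ord_max = 1 & C0 ord0 ord_max = 0])
  (* nu0 = l02/l01 -> 0, nu1 = l11/l12 -> 0 *)
  (hnu0 : (l02 x / l01 x) @[x --> 0^'+] --> (0 : R[i]))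
  (hnu1 : (l11 x / l12 x) @[x --> 0^'+] --> (0 : R[i]))
  (* u = C_{12} = o(nu0 nu1) *)
  (hu : littleo_0p (fun x => (invmx (P0 x) *m P1 x) ord0 ord_max)
                   (fun x => (l02 x / l01 x) * (l11 x / l12 x))) :
  (invmx (P0 x) *m (invmx (M1 x) *m M0 x *m M1 x *m invmx (M0 x)) *m P0 x)
    @[x --> 0^'+] --> C0.
Proof.
pose C x := invmx (P0 x) *m P1 x.
pose p : R -> R[i] := fun x => C x ord0 ord0. pose u : R -> R[i] := fun x => C x ord0 ord_max.
pose q : R -> R[i] := fun x => C x ord_max ord0. pose s : R -> R[i] := fun x => C x ord_max ord_max.
pose n0 : R -> R[i] := fun x => l02 x / l01 x. pose n1 : R -> R[i] := fun x => l11 x / l12 x.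
pose w : R -> R[i] := fun x => u x / (n0 x * n1 x).
pose T : R -> R[i] := fun x => (p x * s x - u x * q x)^-1.
pose K11 : R -> R[i] := fun x => T x * (p x * s x - n0 x * n0 x * n1 x * w x * q x).
pose K21 : R -> R[i] := fun x => T x * (p x * q x * (n0 x - 1) * n1 x).
pose K12 : R -> R[i] := fun x => T x * (w x * s x * (1 - n0 x)).
pose K22 : R -> R[i] := fun x => T x * (p x * s x - q x * w x * n1 x).
pose Y11 : R -> R[i] := fun x => T x * (s x * K11 x - q x * n0 x * K12 x).
pose Y12 : R -> R[i] := fun x => T x * (- w x * n1 x * K11 x + p x * K12 x).
pose Y21 : R -> R[i] := fun x => T x * (s x * K21 x - q x * n0 x * K22 x).
pose Y22 : R -> R[i] := fun x => T x * (- w x * n1 x * K21 x + p x * K22 x).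
pose X' x := mx2 (p x * Y11 x + u x * Y21 x) (p x * Y12 x + u x * Y22 x)
                 (q x * Y11 x + s x * Y21 x) (q x * Y12 x + s x * Y22 x).
have heq : \forall x \near 0^'+, X' x =
    (invmx (P0 x) *m (invmx (M1 x) *m M0 x *m M1 x *m invmx (M0 x)) *m P0 x).
  near=> x.
  have x0 : 0 < x by near: x; exact: nbhs_right_gt.
  have [h1 h2 h3 h4] := hl x x0.
  have hD0 : diag2 (l01 x) (l02 x) \in unitmx.
    by rewrite /diag2 diag2E unitmxE det_mx2 mulr0 subr0 unitfE mulf_neq0.
  have hD1 : diag2 (l11 x) (l12 x) \in unitmx.
    by rewrite /diag2 diag2E unitmxE det_mx2 mulr0 subr0 unitfE mulf_neq0.
  rewrite (hM0 x x0) (hM1 x x0) conj_form //; try exact: hP0; try exact: hP1.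
  have hCu : C x \in unitmx by rewrite unitmx_mul unitmx_inv hP0 ?hP1.
  have hdet : p x * s x - u x * q x != 0.
    by move: hCu; rewrite unitmxE unitfE [C x]mx2E det_mx2.
  rewrite -/(C x) [C x]mx2E /diag2 !diag2E key //.
  by rewrite mul_mx2.
have hE i j : (fun x => C x i j) @ 0^'+ --> C0 i j.
  move: (@coord_continuous _ 2 2 i j C0) => hc.
  exact: (cvg_comp C (fun M => M i j) hC hc).
case: hC0 => c00 c11 c01.
have hp : p @ 0^'+ --> (1:R[i]) by rewrite -c00; exact: hE.
have hs : s @ 0^'+ --> (1:R[i]) by rewrite -c11; exact: hE.
have hu0 : u @ 0^'+ --> (0:R[i]) by rewrite -c01; exact: hE.
have hq : q @ 0^'+ --> C0 ord_max ord0 by exact: hE.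
have hn0 : n0 @ 0^'+ --> (0:R[i]) by exact: hnu0.
have hn1 : n1 @ 0^'+ --> (0:R[i]) by exact: hnu1.
have hw : w @ 0^'+ --> (0:R[i]).
  apply: (proj2 (@cvgr0Pnorm_lt _ (R[i])^o _ _ _ w)) => eps eps0.
  have epsr : eps \is Num.real := gtr0_real eps0.
  have eR : 0 < complex.Re eps by move: eps0; rewrite ltcE => /andP[_].
  have e0 : 0 < complex.Re eps / 2 by rewrite divr_gt0.
  have hu' := hu _ e0.
  near=> x.
  have x0 : 0 < x by near: x; exact: nbhs_right_gt.
  have [h1 h2 h3 h4] := hl x x0.
  have hv : n0 x * n1 x != 0 by rewrite mulf_neq0 // mulf_neq0 // invr_neq0.
  have hux : `|u x| <= ((complex.Re eps / 2)%:C)%C * `|n0 x * n1 x|.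
    by near: x; exact: hu'.
  rewrite /w normf_div.
  apply: (le_lt_trans (y := ((complex.Re eps / 2)%:C)%C)).
    by rewrite ler_pdivrMr ?normr_gt0.
  by rewrite -[X in _ < X](RRe_real epsr) ltcR ltr_pdivrMr // ltr_pMr // ltr1n.
clearbody p u q s n0 n1 w.
have hT : T @ 0^'+ --> (1:R[i]).
  apply: (@cEq _ _ ((1 * 1 - 0 * C0 ord_max ord0)^-1)).
    by rewrite mul0r subr0 mulr1 invr1.
  apply: cV; first by rewrite mul0r subr0 mulr1 oner_neq0.
  exact: (cB (cM hp hs) (cM hu0 hq)).
clearbody T.
have hK11 := cM hT (cB (cM hp hs) (cM (cM (cM (cM hn0 hn0) hn1) hw) hq)).
have hK21 := cM hT (cM (cM (cM hp hq) (cB hn0 (@cC _ 1))) hn1).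
have hK12 := cM hT (cM (cM hw hs) (cB (@cC _ 1) hn0)).
have hK22 := cM hT (cB (cM hp hs) (cM (cM hq hw) hn1)).
have hY11 := cM hT (cB (cM hs hK11) (cM (cM hq hn0) hK12)).
have hY12 := cM hT (cD (cM (cM (cN hw) hn1) hK11) (cM hp hK12)).
have hY21 := cM hT (cB (cM hs hK21) (cM (cM hq hn0) hK22)).
have hY22 := cM hT (cD (cM (cM (cN hw) hn1) hK21) (cM hp hK22)).
have hX := cvg_mx2 (cD (cM hp hY11) (cM hu0 hY21)) (cD (cM hp hY12) (cM hu0 hY22))
                   (cD (cM hq hY11) (cM hs hY21)) (cD (cM hq hY12) (cM hs hY22)).
apply: cvg_trans (near_eq_cvg heq) _.
set L := mx2 _ _ _ _ in hX.
have -> : C0 = L.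
  rewrite [LHS]mx2E c00 c11 c01 /L; congr mx2; ring.
exact: hX.
Unshelve. all: by end_near.
Qed.
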